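(* Let $\mathbb{R}^n$ and $\mathbb{R}^m$ be equipped with arbitrary norms $\|\cdot\|$, with dual norms $\|\cdot\|_*$, and let $g:\mathbb{R}^n\to\mathbb{R}^m$, $y\in\mathbb{R}^m$, $\rho>0$, $L>0$, $\mu_0>0$. Let $B=\{x\in\mathbb{R}^n:\|x\|\le\rho\}$. Assume $g(0)=0$, $g$ is differentiable in $B$ with $\|g'(x^a)-g'(x^b)\|\le L\|x^a-x^b\|$ for all $x^a,x^b\in B$, and $\|g'(0)^T h\|_*\ge\mu_0\|h\|_*$ for all $h\in\mathbb{R}^m$. Let $r^*=\min\{\rho,\frac{\mu_0}{2L}\}$ and suppose $\|y\|\le(\mu_0-Lr^* )r^*$. Then there exists a solution $x^*$ of $g(x)=y$ with $\|x^*\|\le r^*$.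
   Context: For a vector $c$, the dual norm is $\|c\|_*=\sup_{\|x\|=1}(c,x)$. The norm of $g'(x)$ is the operator norm subordinate to the chosen vector norms. *)

(* Defs.v *)
From HB Require Import structures.
From mathcomp Require Import all_boot all_order all_algebra.
From mathcomp Require Import all_classical all_reals.
Set Implicit Arguments. Unset Strict Implicit. Unset Printing Implicit Defensive.
Import Order.TTheory GRing.Theory Num.Theory.
Local Open Scope ring_scope.
Local Open Scope classical_set_scope.

Definition is_norm (R : realType) (n : nat) (N : 'cV[R]_n -> R) : Prop :=
  [/\ forall x, 0 <= N x,
      forall x, N x = 0 -> x = 0,
      forall (a : R) x, N (a *: x) = `|a| * N x
    & forall x y, N (x + y) <= N x + N y].

Definition pairing (R : realType) (n : nat) (c x : 'cV[R]_n) : R :=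
  \sum_(i < n) c i ord0 * x i ord0.

Definition dual_norm (R : realType) (n : nat) (N : 'cV[R]_n -> R) (c : 'cV[R]_n) : R :=
  sup [set pairing c x | x in [set x | N x = 1]].

Definition op_norm (R : realType) (m n : nat)
    (Nm : 'cV[R]_m -> R) (Nn : 'cV[R]_n -> R) (A : 'M[R]_(m, n)) : R :=
  sup [set Nm (A *m x) | x in [set x | Nn x = 1]].

Definition has_fderiv (R : realType) (m n : nat)
    (Nm : 'cV[R]_m -> R) (Nn : 'cV[R]_n -> R)
    (g : 'cV[R]_n -> 'cV[R]_m) (x : 'cV[R]_n) (A : 'M[R]_(m, n)) : Prop :=
  forall eps : R, 0 < eps -> exists2 delta : R, 0 < delta &
    forall z, Nn z < delta -> Nm (g (x + z) - g x - A *m z) <= eps * Nn z.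

(* Main.v *)
Require Import Defs.
From HB Require Import structures.
From mathcomp Require Import all_boot all_order all_algebra.
From mathcomp Require Import all_classical all_reals.
Import Order.TTheory GRing.Theory Num.Theory.
Local Open Scope ring_scope.
From mathcomp Require Import all_analysis.
Import numFieldNormedType.Exports.
From mathcomp Require Import ring lra.
Local Open Scope classical_set_scope.

Section MxNorm.
Context {R : realType}.

Lemma entry_le_mxnorm p q (x : 'M[R]_(p, q)) i j : `|x i j| <= `|x|.
Proof.
rewrite [X in _ <= X]/Num.Def.normr /= mx_normrE.
exact: (le_bigmax _ (fun ij : 'I_p * 'I_q => `|x ij.1 ij.2|) (i, j)).
Qed.

Lemma mxnorm_le p q (x : 'M[R]_(p, q)) M :
  0 <= M -> (forall i j, `|x i j| <= M) -> `|x| <= M.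
Proof.
move=> M0 H; rewrite [X in X <= _]/Num.Def.normr /= mx_normrE.
by apply: bigmax_le => // ij _; apply: H.
Qed.

Lemma trmx_norm_le p q (x : 'M[R]_(p, q)) : `|x^T| <= `|x|.
Proof.
apply: mxnorm_le => // i j; rewrite mxE; exact: entry_le_mxnorm.
Qed.

Lemma cont_within_epsd {n1 n2 : nat} (A : set 'M[R]_(n1, n2)) (f : 'M[R]_(n1, n2) -> R) :
  (forall x, A x -> forall e, 0 < e -> exists2 d, 0 < d &
     forall y, A y -> `|x - y| < d -> `|f x - f y| < e) ->
  {within A, continuous f}.
Proof.
move=> H; apply/subspace_continuousP => x Ax.
apply/cvgrPdist_lt => e e0.
have [d d0 Hd] := H x Ax e e0.
rewrite /within /=.
have := (@cvg_id _ (nbhs x)) => /cvgrPdist_lt /(_ d d0).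
apply: filterS => y xy Ay; exact: Hd.
Qed.

Lemma cont_epsd {n1 n2 : nat} (f : 'M[R]_(n1, n2) -> R) :
  (forall x e, 0 < e -> exists2 d, 0 < d &
     forall y, `|x - y| < d -> `|f x - f y| < e) ->
  continuous f.
Proof.
move=> H x P /= /(nbhs_ballP (f x)) [e /= e0 eP]; apply/nbhs_ballP.
have [d d0 Hd] := H x e e0; exists d => // y xy; apply: eP.
move: xy; rewrite mx_norm_ball /ball_ /= => xy.
by rewrite /ball /=; apply: Hd.
Qed.


Lemma evt_cV n (Phi f : 'cV[R]_n -> R) (C : set R) (M : R) :
  closed C -> (exists x, C (Phi x)) ->
  (forall x e, 0 < e -> exists2 d, 0 < d &
     forall y, `|x - y| < d -> `|Phi x - Phi y| < e) ->
  (forall x, C (Phi x) -> forall i, `|x i 0| <= M) ->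
  (forall x, C (Phi x) -> forall e, 0 < e -> exists2 d, 0 < d &
     forall y, C (Phi y) -> `|x - y| < d -> `|f x - f y| < e) ->
  exists2 c, C (Phi c) & forall t, C (Phi t) -> f c <= f t.
Proof.
move=> cC [x0 Cx0] hPhi hM hf.
have trB (v w : 'rV[R]_n) : `|v^T - w^T| <= `|v - w|.
  by rewrite -linearB /=; apply: trmx_norm_le.
set A' := [set v : 'rV[R]_n | C (Phi v^T)].
have [c cA cmin] : exists2 c, c \in A' & forall t, t \in A' -> f c^T <= f t^T.
  apply: (@EVT_min_rV R n (fun v => f v^T) A').
  - by exists x0^T; rewrite /A' /= trmxK.
  - apply: bounded_closed_compact.
      rewrite /bounded_near.
      apply: filterS (nbhs_pinfty_ge (r := Num.max M 0) _); last by rewrite realE le_max lexx orbT.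
      move=> M0 hM0 v Av; apply: mxnorm_le.
        by apply: le_trans hM0; rewrite le_max lexx orbT.
      move=> i j; rewrite (ord1 i).
      have := hM _ Av j; rewrite mxE => h; apply: le_trans h _.
      by apply: le_trans hM0; rewrite le_max lexx.
    have hc : continuous (fun v : 'rV[R]_n => Phi v^T).
      apply: cont_epsd => v e e0; have [d d0 hd] := hPhi v^T e e0.
      by exists d => // w vw; apply: hd; apply: le_lt_trans (trB _ _) vw.
    move/continuous_closedP: hc => hc; exact: hc.
  - apply: cont_within_epsd => v Av e e0; have [d d0 hd] := hf _ Av e e0.
    by exists d => // w Aw vw; apply: hd => //; apply: le_lt_trans (trB _ _) vw.
exists c^T; first by move: cA; rewrite inE.
by move=> t Ct; have := cmin t^T; rewrite trmxK; apply; rewrite inE /A' /= trmxK.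
Qed.

End MxNorm.


Section Norms.
Context {R : realType} {n : nat} (N : 'cV[R]_n -> R) (hN : is_norm N).

Lemma nN_ge0 x : 0 <= N x. Proof. by case: hN. Qed.
Lemma nN_eq0 x : N x = 0 -> x = 0. Proof. by case: hN => _ h _ _; apply: h. Qed.
Lemma nNZ a x : N (a *: x) = `|a| * N x. Proof. by case: hN. Qed.
Lemma nND x y : N (x + y) <= N x + N y. Proof. by case: hN. Qed.
Lemma nN0 : N 0 = 0. Proof. by rewrite -(scale0r 0) nNZ normr0 mul0r. Qed.
Lemma nNN x : N (- x) = N x. Proof. by rewrite -scaleN1r nNZ normrN normr1 mul1r. Qed.
Lemma nNB x y : N (x - y) = N (y - x). Proof. by rewrite -nNN opprB. Qed.
Lemma nN_gt0 x : x != 0 -> 0 < N x.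
Proof. by move=> x0; rewrite lt_neqAle nN_ge0 andbT eq_sym; apply/eqP => /nN_eq0 /eqP; rewrite (negbTE x0). Qed.

Lemma nN_dist x y : `|N x - N y| <= N (x - y).
Proof.
have h1 := nND (x - y) y; rewrite subrK in h1.
have h2 := nND (y - x) x; rewrite subrK nNB in h2.
rewrite ler_norml; apply/andP; split; lra.
Qed.

Lemma nN_sum k (F : 'I_k -> 'cV[R]_n) : N (\sum_i F i) <= \sum_i N (F i).
Proof.
apply: (big_ind2 (fun a b => N a <= b)); first by rewrite nN0.
  by move=> a1 a2 b1 b2 h1 h2; apply: le_trans (nND _ _) _; apply: lerD.
by [].
Qed.

Lemma col_decomp (x : 'cV[R]_n) : x = \sum_i x i 0 *: delta_mx i 0.
Proof.
apply/matrixP => i j; rewrite summxE (ord1 j).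
rewrite (bigD1 i) //= big1 ?addr0; first by rewrite !mxE !eqxx mulr1.
by move=> k ki; rewrite !mxE eq_sym (negbTE ki) mulr0.
Qed.

Lemma nN_ub : exists2 b, 0 <= b & forall x, N x <= b * `|x|.
Proof.
exists (\sum_(i < n) N (delta_mx i 0)); first by apply: sumr_ge0 => i _; apply: nN_ge0.
move=> x; rewrite [in N x](col_decomp x); apply: le_trans; first exact: nN_sum.
rewrite mulr_suml; apply: ler_sum => i _; rewrite nNZ mulrC.
by apply: ler_wpM2l; [apply: nN_ge0 | apply: (entry_le_mxnorm _ _)].
Qed.

Lemma nN_epsd x e : 0 < e -> exists2 d, 0 < d &
     forall y, `|x - y| < d -> `|N x - N y| < e.
Proof.
move=> e0; have [b b0 hb] := nN_ub.
exists (e / (b + 1)); first by rewrite divr_gt0 // ltr_wpDl.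
move=> y xy; apply: le_lt_trans (nN_dist _ _) _.
have b1 : 0 < b + 1 by rewrite ltr_wpDl.
have h := hb (x - y).
have E : (b + 1) * (e / (b + 1)) = e by field; rewrite gt_eqF.
have h2 : (b + 1) * `|x - y| < (b + 1) * (e / (b + 1)) by rewrite ltr_pM2l.
have h3 : 0 <= `|x - y| by [].
rewrite E in h2; nra.
Qed.

End Norms.

Lemma nN_lb {R : realType} {n : nat} (N : 'cV[R]_n -> R) (hN : is_norm N) :
  exists2 a, 0 < a & forall x, `|x| <= a * N x.
Proof.
move: N hN; case: n => [|k] N' hN'.
  by exists 1 => // x; rewrite flatmx0 normr0 mul1r; case: hN'.
set x0 := (const_mx 1 : 'cV[R]_k.+1).
have nx0 : 0 < `|x0|.
  rewrite normr_gt0; apply/eqP => /matrixP /(_ ord0 ord0); rewrite !mxE => /eqP.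
  by rewrite oner_eq0.
have [c c1 cmin] : exists2 c, [set x : R | x = 1] `|c| &
   forall t, [set x : R | x = 1] `|t| -> N' c <= N' t.
  apply: (@evt_cV R k.+1 (fun x => `|x|) N' [set x | x = 1] 1).
  - exact: closed_eq.
  - exists (`|x0|^-1 *: x0) => /=; rewrite normrZ ger0_norm ?invr_ge0 ?ltW //.
    by rewrite mulVf ?gt_eqF.
  - move=> x e e0; exists e => // y xy; apply: le_lt_trans (ler_dist_dist _ _) xy.
  - by move=> x /= x1 i; rewrite -x1; apply: (entry_le_mxnorm _ _).
  - move=> x _ e e0; have [d d0 hd] := nN_epsd N' hN' x e e0.
    by exists d => // y _; apply: hd.
have c0 : c != 0 by apply/eqP => c0; move: c1; rewrite /= c0 normr0 => /eqP; rewrite eq_sym oner_eq0.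
have Nc0 := nN_gt0 N' hN' c c0.
exists (N' c)^-1; first by rewrite invr_gt0.
move=> x; have [->|x0n] := eqVneq x 0; first by rewrite normr0 (nN0 N' hN') mulr0.
have nx : 0 < `|x| by rewrite normr_gt0.
have u1 : `|(`|x|^-1) *: x| = 1 by rewrite normrZ normfV normr_id mulVf ?gt_eqF.
have h := cmin _ u1; rewrite (nNZ N' hN') normfV normr_id in h.
rewrite mulrC ler_pdivlMr //.
rewrite -(ler_pM2l nx) mulVKf ?gt_eqF // in h.
Qed.

Lemma nN_entry {R : realType} {n : nat} (N : 'cV[R]_n -> R) (hN : is_norm N) :
  exists2 a, 0 < a & forall (x : 'cV[R]_n) (i : 'I_n), `|x i 0| <= a * N x.
Proof.
have [a a0 ha] := nN_lb N hN; exists a => // x i.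
by apply: le_trans (ha x); apply: (entry_le_mxnorm _ _).
Qed.



Section Pairing.
Context {R : realType} {n : nat}.
Implicit Types c x y : 'cV[R]_n.

Lemma pairingE c x : pairing c x = (c^T *m x) 0 0.
Proof. by rewrite /pairing mxE; apply: eq_bigr => i _; rewrite mxE. Qed.

Lemma pairingD c x y : pairing c (x + y) = pairing c x + pairing c y.
Proof. by rewrite !pairingE mulmxDr mxE. Qed.
Lemma pairingZ c a x : pairing c (a *: x) = a * pairing c x.
Proof. by rewrite !pairingE -scalemxAr mxE. Qed.
Lemma pairingN c x : pairing c (- x) = - pairing c x.
Proof. by rewrite -scaleN1r pairingZ mulN1r. Qed.
Lemma pairingB c x y : pairing c (x - y) = pairing c x - pairing c y.
Proof. by rewrite pairingD pairingN. Qed.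
Lemma pairing0 c : pairing c 0 = 0.
Proof. by rewrite -(scale0r 0) pairingZ mul0r. Qed.
Lemma pairingC c x : pairing c x = pairing x c.
Proof. by rewrite /pairing; apply: eq_bigr => i _; rewrite mulrC. Qed.
Lemma pairingDl c y x : pairing (c + y) x = pairing c x + pairing y x.
Proof. by rewrite !(pairingC _ x) pairingD. Qed.
Lemma pairingBl c y x : pairing (c - y) x = pairing c x - pairing y x.
Proof. by rewrite !(pairingC _ x) pairingB. Qed.
Lemma pairingZl a c x : pairing (a *: c) x = a * pairing c x.
Proof. by rewrite !(pairingC _ x) pairingZ. Qed.
Lemma pairing_ge0 x : 0 <= pairing x x.
Proof. by apply: sumr_ge0 => i _; rewrite -expr2 sqr_ge0. Qed.
Lemma pairing_gt0 x : x != 0 -> 0 < pairing x x.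
Proof.
move=> x0; rewrite lt_neqAle pairing_ge0 andbT; apply/eqP => h.
move/eqP: x0; apply; apply/matrixP => i j; rewrite (ord1 j) mxE.
have : pairing x x == 0 by rewrite -h.
rewrite /pairing.
rewrite psumr_eq0 => [/allP /(_ i (mem_index_enum _)) /=|k _]; last by rewrite -expr2 sqr_ge0.
by rewrite mulf_eq0 orbb => /eqP.
Qed.
Lemma pairing_abs c x : `|pairing c x| <= \sum_i `|c i 0| * `|x i 0|.
Proof. by apply: le_trans (ler_norm_sum _ _ _) _; apply: ler_sum => i _; rewrite normrM. Qed.
End Pairing.

Lemma pairing_mul {R : realType} {m n : nat} (h : 'cV[R]_m) (A : 'M[R]_(m, n)) x :
  pairing h (A *m x) = pairing (A^T *m h) x.
Proof. by rewrite !pairingE trmx_mul trmxK mulmxA. Qed.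

Section Dual.
Context {R : realType} {n : nat} (N : 'cV[R]_n -> R) (hN : is_norm N).

Lemma dual_ub c : has_ubound [set pairing c x | x in [set x | N x = 1]].
Proof.
have [a a0 ha] := nN_entry N hN.
exists (\sum_i `|c i 0| * a) => _ [x /= Nx <-].
apply: le_trans (ler_norm _) _; apply: le_trans (pairing_abs _ _) _.
apply: ler_sum => i _; apply: ler_wpM2l => //.
by have := ha x i; rewrite Nx mulr1.
Qed.

Lemma pairing_le_dual c x : pairing c x <= dual_norm N c * N x.
Proof.
have [->|x0] := eqVneq x 0; first by rewrite pairing0 (nN0 N hN) mulr0.
have Nx := nN_gt0 N hN x x0.
have h : pairing c ((N x)^-1 *: x) <= dual_norm N c.
  apply: ub_le_sup; first exact: dual_ub.
  exists ((N x)^-1 *: x) => //=.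
  by rewrite (nNZ N hN) ger0_norm ?invr_ge0 ?ltW // mulVf ?gt_eqF.
rewrite pairingZ in h; rewrite -(ler_pM2l Nx) mulrA mulfV ?gt_eqF // mul1r in h.
by rewrite mulrC.
Qed.

Lemma dual_le c B : 0 <= B -> (forall x, N x = 1 -> pairing c x <= B) -> dual_norm N c <= B.
Proof.
move=> B0 hB; rewrite /dual_norm.
have [->|ne] := eqVneq [set pairing c x | x in [set x | N x = 1]] set0.
  by rewrite sup0.
apply: ge_sup; first by apply/set0P.
by move=> _ [x /= Nx <-]; apply: hB.
Qed.

Lemma dual_gt0 c : c != 0 -> 0 < dual_norm N c.
Proof.
move=> c0; have h := pairing_le_dual c c; have p := pairing_gt0 c c0.
have Nc := nN_gt0 N hN c c0.
have := lt_le_trans p h; rewrite pmulr_lgt0 //.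
Qed.

End Dual.

Section Op.
Context {R : realType} {m n : nat} (Nm : 'cV[R]_m -> R) (hNm : is_norm Nm)
  (Nn : 'cV[R]_n -> R) (hNn : is_norm Nn).

Lemma mulmx_norm_le (A : 'M[R]_(m, n)) a : 0 < a -> (forall (x : 'cV[R]_n) (i : 'I_n), `|x i 0| <= a * Nn x) ->
  forall x, `|A *m x| <= \sum_(j < n) `|A| * a * Nn x.
Proof.
move=> a0 ha x; apply: mxnorm_le.
  apply: sumr_ge0 => j _; apply: mulr_ge0; [apply: mulr_ge0 => //; apply: ltW | apply: (nN_ge0 Nn hNn)].
  done.
move=> i j; rewrite (ord1 j) mxE; apply: le_trans (ler_norm_sum _ _ _) _.
apply: ler_sum => k _; rewrite normrM -mulrA; apply: ler_pM => //.
exact: (entry_le_mxnorm _ _).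
Qed.

Lemma op_ub (A : 'M[R]_(m, n)) : has_ubound [set Nm (A *m x) | x in [set x | Nn x = 1]].
Proof.
have [a a0 ha] := nN_entry Nn hNn.
have [b b0 hb] := nN_ub Nm hNm.
exists (b * \sum_(j < n) `|A| * a * 1) => _ [x /= Nx <-].
apply: le_trans (hb _) _; apply: ler_wpM2l => //.
by have := mulmx_norm_le A a a0 ha x; rewrite Nx.
Qed.

Lemma op_le (A : 'M[R]_(m, n)) x : Nm (A *m x) <= op_norm Nm Nn A * Nn x.
Proof.
have [->|x0] := eqVneq x 0; first by rewrite mulmx0 (nN0 Nm hNm) (nN0 Nn hNn) mulr0.
have Nx := nN_gt0 Nn hNn x x0.
have h : Nm (A *m ((Nn x)^-1 *: x)) <= op_norm Nm Nn A.
  apply: ub_le_sup; first exact: op_ub.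
  exists ((Nn x)^-1 *: x) => //=.
  by rewrite (nNZ Nn hNn) ger0_norm ?invr_ge0 ?ltW // mulVf ?gt_eqF.
have ig : 0 <= (Nn x)^-1 by rewrite invr_ge0 ltW.
rewrite -scalemxAr (nNZ Nm hNm) (ger0_norm ig) in h.
rewrite -(ler_pM2l Nx) mulrA mulfV ?gt_eqF // mul1r in h.
by rewrite mulrC.
Qed.
End Op.

Lemma evt_ball {R : realType} {n : nat} (N : 'cV[R]_n -> R) (hN : is_norm N) (r : R)
  (f : 'cV[R]_n -> R) : 0 <= r ->
  (forall x, N x <= r -> forall e, 0 < e -> exists2 d, 0 < d &
     forall y, N y <= r -> `|x - y| < d -> `|f x - f y| < e) ->
  exists2 c, N c <= r & forall t, N t <= r -> f c <= f t.
Proof.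
move=> r0 hf.
have [a a0 ha] := nN_entry N hN.
apply: (@evt_cV R n N f [set x | x <= r] (a * r)).
- exact: closed_le.
- by exists 0 => /=; rewrite (nN0 N hN).
- exact: nN_epsd.
- move=> x /= Nx i; apply: le_trans (ha x i) _; rewrite ler_pM2l //.
- exact: hf.
Qed.


Lemma pairing_mx {R : realType} {n : nat} (c z : 'cV[R]_n) :
  `|pairing c z| <= n%:R * (`|c| * `|z|).
Proof.
apply: le_trans (pairing_abs _ _) _.
apply: le_trans (_ : _ <= \sum_(i < n) (`|c| * `|z|)) _.
  by apply: ler_sum => i _; apply: ler_pM => //; apply: (entry_le_mxnorm _ _).
by rewrite sumr_const card_ord mulr_natl.
Qed.

Lemma mulmx_mx {R : realType} {m n : nat} (A : 'M[R]_(m, n)) (z : 'cV[R]_n) :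
  `|A *m z| <= n%:R * (`|A| * `|z|).
Proof.
apply: mxnorm_le; first by apply: mulr_ge0 => //; apply: mulr_ge0.
move=> i j; rewrite (ord1 j) mxE; apply: le_trans (ler_norm_sum _ _ _) _.
apply: le_trans (_ : _ <= \sum_(k < n) (`|A| * `|z|)) _; last by rewrite sumr_const card_ord mulr_natl.
by apply: ler_sum => k _; rewrite normrM; apply: ler_pM => //; apply: (entry_le_mxnorm _ _).
Qed.

Lemma lip_epsd {R : realType} {n : nat} (S : set 'cV[R]_n) (f : 'cV[R]_n -> R) (K : R) :
  0 <= K -> (forall x y, S x -> S y -> `|f x - f y| <= K * `|x - y|) ->
  forall x, S x -> forall e, 0 < e -> exists2 d, 0 < d &
     forall y, S y -> `|x - y| < d -> `|f x - f y| < e.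
Proof.
move=> K0 hK x Sx e e0.
have K1 : 0 < K + 1 by rewrite ltr_wpDl.
exists (e / (K + 1)); first by rewrite divr_gt0.
move=> y Sy xy; apply: le_lt_trans (hK _ _ Sx Sy) _.
have E : (K + 1) * (e / (K + 1)) = e by field; rewrite gt_eqF.
have h2 : (K + 1) * `|x - y| < (K + 1) * (e / (K + 1)) by rewrite ltr_pM2l.
have h3 : 0 <= `|x - y| by [].
rewrite E in h2; nra.
Qed.

Lemma pairingNl {R : realType} {n : nat} (c x : 'cV[R]_n) : pairing (- c) x = - pairing c x.
Proof. by rewrite pairingC pairingN pairingC. Qed.

Lemma pairing_quad {R : realType} {n : nat} (h d : 'cV[R]_n) t :
  pairing (h - t *: d) (h - t *: d) = pairing h h - 2 * t * pairing h d + t ^+ 2 * pairing d d.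
Proof.
rewrite !(pairingB, pairingBl, pairingZ, pairingZl) (pairingC d h); ring.
Qed.

Lemma surj {R : realType} {m n : nat} (Nm : 'cV[R]_m -> R) (hNm : is_norm Nm)
  (Nn : 'cV[R]_n -> R) (hNn : is_norm Nn) (A0 A : 'M[R]_(m, n)) (mu0 beta : R) :
  0 <= beta -> beta < mu0 ->
  (forall h, mu0 * dual_norm Nm h <= dual_norm Nn (A0^T *m h)) ->
  op_norm Nm Nn (A0 - A) <= beta ->
  forall v, exists u, A *m u = v /\ Nn u <= Nm v / (mu0 - beta).
Proof.
move=> b0 bmu hreg hop v.
set mu := mu0 - beta.
have mu0' : 0 < mu by rewrite subr_gt0.
have [->|v0] := eqVneq v 0.
  by exists 0; rewrite mulmx0 (nN0 Nn hNn) (nN0 Nm hNm) mul0r.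
have Nv := nN_gt0 Nm hNm v v0.
set p := (mu / Nm v) *: v.
have Np : Nm p = mu.
  by rewrite (nNZ Nm hNm) ger0_norm ?divr_ge0 ?ltW // divfK ?gt_eqF.
set F := fun u => pairing (p - A *m u) (p - A *m u).
have [a a0 ha] := nN_lb Nn hNn.
set S := 2 * `|p| + 2 * (n%:R * (`|A| * a)).
set K := m%:R * (n%:R * `|A|) * S.
have K0 : 0 <= K.
  by apply: mulr_ge0; [apply: mulr_ge0 => //; apply: mulr_ge0 | apply: addr_ge0; apply: mulr_ge0 => //; apply: mulr_ge0 => //; apply: mulr_ge0 => //; apply: ltW].
have [u0 Nu0 u0min] : exists2 u0, Nn u0 <= 1 & forall t, Nn t <= 1 -> F u0 <= F t.
  apply: (@evt_ball R n Nn hNn 1 F ler01); apply: (@lip_epsd R n (fun u => Nn u <= 1) F K K0) => x y Nx Ny.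
  rewrite /F.
  have -> : pairing (p - A *m x) (p - A *m x) - pairing (p - A *m y) (p - A *m y)
     = pairing (A *m (y - x)) ((p - A *m x) + (p - A *m y)).
    rewrite mulmxBr !(pairingD, pairingB, pairingBl, pairingDl).
    rewrite ?pairingNl ?pairingN (pairingC p (A *m x)) (pairingC p (A *m y)) (pairingC (A *m y) (A *m x)); ring.
  apply: le_trans (pairing_mx _ _) _.
  have hx : `|A *m x| <= n%:R * (`|A| * a).
    apply: le_trans (mulmx_mx _ _) _; apply: ler_wpM2l => //; apply: ler_wpM2l => //.
    by apply: le_trans (ha x) _; rewrite -[X in _ <= X]mulr1 ler_wpM2l // ltW.
  have hy : `|A *m y| <= n%:R * (`|A| * a).
    apply: le_trans (mulmx_mx _ _) _; apply: ler_wpM2l => //; apply: ler_wpM2l => //.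
    by apply: le_trans (ha y) _; rewrite -[X in _ <= X]mulr1 ler_wpM2l // ltW.
  have hs : `|p - A *m x + (p - A *m y)| <= 2 * `|p| + 2 * (n%:R * (`|A| * a)).
    apply: le_trans (ler_normD _ _) _.
    have h1 := ler_normB p (A *m x); have h2 := ler_normB p (A *m y); lra.
  have hd : `|A *m (y - x)| <= n%:R * (`|A| * `|x - y|).
    by apply: le_trans (mulmx_mx _ _) _; rewrite distrC.
  have S0 : 0 <= S by apply: le_trans hs.
  have e1 : `|A *m (y - x)| * `|p - A *m x + (p - A *m y)| <= (n%:R * (`|A| * `|x - y|)) * S.
    by apply: ler_pM.
  have e2 := ler_wpM2l (ler0n _ m) e1.
  apply: le_trans e2 _; rewrite /K le_eqVlt; apply/orP; left; apply/eqP; ring.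
set h := p - A *m u0.
have var : forall u, Nn u <= 1 -> pairing h (A *m u) <= pairing h (A *m u0).
  move=> u Nu; rewrite -subr_le0 -pairingB -mulmxBr.
  set d := A *m (u - u0); set phd := pairing h d; set pdd := pairing d d.
  rewrite leNgt; apply/negP => phd0.
  have pdd0 : 0 <= pdd := pairing_ge0 d.
  set t := phd / (pdd + phd).
  have s0 : 0 < pdd + phd by lra.
  have t0 : 0 < t by rewrite divr_gt0.
  have t1 : t <= 1 by rewrite ler_pdivrMr // mul1r; lra.
  have Nut : Nn (u0 + t *: (u - u0)) <= 1.
    have -> : u0 + t *: (u - u0) = (1 - t) *: u0 + t *: u.
      by apply/matrixP => i j; rewrite !mxE; ring.
    apply: le_trans (nND Nn hNn _ _) _.
    have t1' : 0 <= 1 - t by rewrite subr_ge0.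
    rewrite !(nNZ Nn hNn) (ger0_norm (ltW t0)) (ger0_norm t1').
    have := ler_wpM2l (ltW t0) Nu; have : (1 - t) * Nn u0 <= 1 - t by rewrite -[X in _ <= X]mulr1 ler_wpM2l ?subr_ge0.
    lra.
  have := u0min _ Nut; rewrite /F mulmxDr -scalemxAr.
  have -> : p - (A *m u0 + t *: (A *m (u - u0))) = h - t *: d.
    by rewrite /h /d opprD addrA.
  rewrite pairing_quad -/phd -/pdd.
  move=> H.
  have H2 : 2 * phd <= t * pdd.
    have : t * (2 * phd) <= t * (t * pdd) by nra.
    by rewrite ler_pM2l.
  have H3 : t * pdd < 2 * phd.
    rewrite /t mulrAC ltr_pdivrMr //; nra.
  lra.
have [h0|hn0] := eqVneq h 0.
  have pA : p = A *m u0 by apply/eqP; rewrite -subr_eq0 -/h h0.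
  exists ((Nm v / mu) *: u0); split.
    rewrite -scalemxAr -pA /p scalerA mulrA divfK ?gt_eqF // mulfV ?gt_eqF //.
    by rewrite scale1r.
  have q0 : 0 <= Nm v / mu by rewrite divr_ge0 // ltW.
  rewrite (nNZ Nn hNn) (ger0_norm q0).
  by rewrite -[X in _ <= X]mulr1 ler_wpM2l.
exfalso.
have D0 := dual_gt0 Nm hNm h hn0.
set D := dual_norm Nm h in D0.
have phA0 : 0 <= pairing h (A *m u0).
  have := var 0; rewrite (nN0 Nn hNn) ler01 mulmx0 pairing0; exact.
have hdual : dual_norm Nn (A0^T *m h) <= pairing h (A *m u0) + D * beta.
  apply: (@dual_le R n Nn (A0^T *m h)); first by apply: addr_ge0 => //; apply: mulr_ge0 => //; apply: ltW.
  move=> x Nx; rewrite -pairing_mul.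
  have -> : A0 *m x = A *m x + (A0 - A) *m x by rewrite mulmxBl addrCA subrr addr0.
  rewrite pairingD; apply: lerD; first by apply: var; rewrite Nx.
  apply: le_trans (pairing_le_dual Nm hNm _ _) _; rewrite -/D; apply: ler_wpM2l; first exact: ltW.
  apply: le_trans (op_le Nm hNm Nn hNn _ _) _; rewrite Nx mulr1; exact: hop.
have hp : pairing h p = pairing h (A *m u0) + pairing h h.
  by rewrite -pairingD /h addrCA subrr addr0.
have hh := pairing_gt0 h hn0.
have hpD : pairing h p <= D * mu by rewrite -Np; apply: pairing_le_dual.
have := hreg h; rewrite -/D => hr.
have : mu0 * D < D * mu + D * beta by lra.
rewrite /mu; lra.
Qed.


Lemma loclip_epsd {R : realType} {n : nat} (S : set 'cV[R]_n) (f : 'cV[R]_n -> R) :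
  (forall x, S x -> exists k, exists2 d0, 0 < d0 & 0 <= k /\
     forall y, S y -> `|x - y| < d0 -> `|f x - f y| <= k * `|x - y|) ->
  forall x, S x -> forall e, 0 < e -> exists2 d, 0 < d &
     forall y, S y -> `|x - y| < d -> `|f x - f y| < e.
Proof.
move=> hS x Sx e e0; have [k [d0 d00 [k0 hk]]] := hS x Sx.
have K1 : 0 < k + 1 by rewrite ltr_wpDl.
exists (Num.min d0 (e / (k + 1))); first by rewrite lt_min d00 divr_gt0.
move=> y Sy; rewrite lt_min => /andP [xy1 xy2].
apply: le_lt_trans (hk _ Sy xy1) _.
have E : (k + 1) * (e / (k + 1)) = e by field; rewrite gt_eqF.
have h2 : (k + 1) * `|x - y| < (k + 1) * (e / (k + 1)) by rewrite ltr_pM2l.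
have h3 : 0 <= `|x - y| by [].
rewrite E in h2; nra.
Qed.

Local Close Scope classical_set_scope.

Theorem corollary3 (R : realType) (n m : nat)
    (Nn : 'cV[R]_n -> R) (Nm : 'cV[R]_m -> R)
    (hNn : is_norm Nn) (hNm : is_norm Nm)
    (g : 'cV[R]_n -> 'cV[R]_m) (g' : 'cV[R]_n -> 'M[R]_(m, n))
    (y : 'cV[R]_m) (rho L mu0 : R)
    (hrho : 0 < rho) (hL : 0 < L) (hmu0 : 0 < mu0)
    (hg0 : g 0 = 0)
    (hder : forall x, Nn x <= rho -> has_fderiv Nm Nn g x (g' x))
    (hlip : forall xa xb, Nn xa <= rho -> Nn xb <= rho ->
       op_norm Nm Nn (g' xa - g' xb) <= L * Nn (xa - xb))
    (hreg : forall h : 'cV[R]_m,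
       dual_norm Nn ((g' 0)^T *m h) >= mu0 * dual_norm Nm h)
    (hy : Nm y <= (mu0 - L * Num.min rho (mu0 / (2 * L))) * Num.min rho (mu0 / (2 * L))) :
  exists xs : 'cV[R]_n, g xs = y /\ Nn xs <= Num.min rho (mu0 / (2 * L)).
Proof.
set r := Num.min rho (mu0 / (2 * L)) in hy *.
have r0 : 0 < r by rewrite lt_min hrho divr_gt0 // mulr_gt0.
have rrho : r <= rho by rewrite ge_min lexx.
have r2 : r * (2 * L) <= mu0.
  by rewrite -ler_pdivlMr ?mulr_gt0 // ge_min lexx orbT.
have [k [k0 k1 kr]] : exists k : R, [/\ 0 < k, k < 1 & (mu0 - L * r) * r < k * ((mu0 - L * r / 2) * r)].
  have q0 : 0 < mu0 - L * r / 2 by nra.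
  exists ((mu0 - 3 / 4 * L * r) / (mu0 - L * r / 2)); split.
  - by apply: divr_gt0 => //; nra.
  - by rewrite ltr_pdivrMr // mul1r; nra.
  - rewrite mulrA divfK ?gt_eqF //; have := mulr_gt0 (mulr_gt0 hL r0) r0; nra.
pose th (s : R) := k * (mu0 * s) - k * L * (s * s) / 2.
have th_mono a b : 0 <= a -> a <= b -> b <= r -> th a <= th b.
  move=> a0 ab br; rewrite /th.
  have : 0 <= k * (b - a) * (mu0 - L * (a + b) / 2).
    apply: mulr_ge0; first by apply: mulr_ge0; [apply: ltW | rewrite subr_ge0].
    nra.
  move=> h; nra.
have th_step s d : 0 <= d -> th (s + d) <= th s + k * d * (mu0 - L * s).
  move=> d0; rewrite /th.
  have : 0 <= k * L * (d * d) / 2.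
    by apply: divr_ge0 => //; apply: mulr_ge0; [apply: mulr_ge0; apply: ltW|apply: mulr_ge0].
  move=> h; nra.
pose G x := Nm (g x - y) + th (Nn x).
have [b b0 hb] := nN_ub Nn hNn.
have [xb Nxb xmin] : exists2 xb, Nn xb <= r & forall t, Nn t <= r -> G xb <= G t.
  apply: (@evt_ball R n Nn hNn r G (ltW r0)); apply: loclip_epsd => x Nx.
  have [d d0 hd] := hder x (le_trans Nx rrho) 1 ltr01.
  set o := op_norm Nm Nn (g' x).
  exists ((1 + `|o|) * b + mu0 * b); exists (d / (b + 1)).
    by rewrite divr_gt0 // ltr_wpDl.
  split.
    by apply: addr_ge0; apply: mulr_ge0 => //; try apply: addr_ge0; try apply: ltW.
  move=> x' Nx' xx'.
  have b1 : 0 < b + 1 by rewrite ltr_wpDl.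
  have hz : Nn (x' - x) <= b * `|x - x'|.
    by rewrite (nNB Nn hNn); apply: le_trans; first exact: hb.  
  have hzd : Nn (x' - x) < d.
    apply: le_lt_trans hz _.
    have : (b + 1) * `|x - x'| < (b + 1) * (d / (b + 1)) by rewrite ltr_pM2l.
    have -> : (b + 1) * (d / (b + 1)) = d by field; rewrite gt_eqF.
    have : 0 <= `|x - x'| by []. nra.
  have hg := hd _ hzd; rewrite addrCA subrr addr0 mul1r in hg.
  have hgo := op_le Nm hNm Nn hNn (g' x) (x' - x). rewrite -/o in hgo.
  have hgx : Nm (g x' - g x) <= (1 + `|o|) * Nn (x' - x).
    have := nND Nm hNm (g x' - g x - g' x *m (x' - x)) (g' x *m (x' - x)).
    rewrite subrK => h1.
    have : o * Nn (x' - x) <= `|o| * Nn (x' - x).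
      by apply: ler_wpM2r; [apply: (nN_ge0 Nn hNn) | apply: ler_norm].
    lra.
  have hG1 : `|Nm (g x - y) - Nm (g x' - y)| <= Nm (g x' - g x).
    apply: le_trans (nN_dist Nm hNm _ _) _.
    have -> : g x - y - (g x' - y) = - (g x' - g x) by apply/matrixP => i j; rewrite !mxE; ring.
    by rewrite (nNN Nm hNm).
  have hs : `|Nn x - Nn x'| <= Nn (x' - x).
    by apply: le_trans (nN_dist Nn hNn _ _) _; rewrite (nNB Nn hNn).
  have s0 := nN_ge0 Nn hNn x; have s0' := nN_ge0 Nn hNn x'.
  have hG2 : `|th (Nn x) - th (Nn x')| <= mu0 * Nn (x' - x).
    have -> : th (Nn x) - th (Nn x') = k * (Nn x - Nn x') * (mu0 - L * (Nn x + Nn x') / 2).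
      by rewrite /th; ring.
    rewrite normrM normrM (gtr0_norm k0).
    have hm : `|mu0 - L * (Nn x + Nn x') / 2| <= mu0.
      rewrite ler_norml; apply/andP; split; nra.
    have e1 : `|Nn x - Nn x'| * `|mu0 - L * (Nn x + Nn x') / 2| <= Nn (x' - x) * mu0.
      by apply: ler_pM.
    have e2 : k * (`|Nn x - Nn x'| * `|mu0 - L * (Nn x + Nn x') / 2|) <=
       1 * (`|Nn x - Nn x'| * `|mu0 - L * (Nn x + Nn x') / 2|).
      by apply: ler_wpM2r; [apply: mulr_ge0 | apply: ltW].
    rewrite -mulrA; rewrite mul1r in e2; apply: le_trans e2 _; apply: le_trans e1 _.
    by rewrite mulrC.
  rewrite /G.
  have -> : Nm (g x - y) + th (Nn x) - (Nm (g x' - y) + th (Nn x')) =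
     (Nm (g x - y) - Nm (g x' - y)) + (th (Nn x) - th (Nn x')) by ring.
  apply: le_trans (ler_normD _ _) _.
  have hN0 := nN_ge0 Nn hNn (x' - x).
  have : (1 + `|o|) * Nn (x' - x) <= (1 + `|o|) * (b * `|x - x'|).
    by apply: ler_wpM2l => //; apply: addr_ge0.
  have : mu0 * Nn (x' - x) <= mu0 * (b * `|x - x'|) by apply: ler_wpM2l => //; apply: ltW.
  move=> h1 h2.
  have -> : ((1 + `|o|) * b + mu0 * b) * `|x - x'| = (1 + `|o|) * (b * `|x - x'|) + mu0 * (b * `|x - x'|) by ring.
  lra.
have G0 : G 0 = Nm y.
  by rewrite /G hg0 sub0r (nNN Nm hNm) (nN0 Nn hNn) /th !mulr0 mul0r subrr addr0.
exists xb; split => //.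
apply/eqP; rewrite -subr_eq0; apply/negP => w0.
set w := g xb - y in w0.
have Nw := nN_gt0 Nm hNm w (introN idP w0).
have sx0 := nN_ge0 Nn hNn xb.
set s := Nn xb in Nxb sx0.
have Gxb : G xb = Nm w + th s by [].
have hGmin := xmin 0; rewrite (nN0 Nn hNn) G0 in hGmin.
have := hGmin (ltW r0) => Gle.
have [sr|sr] := ltP s r; last first.
  have sr' : s = r by apply/eqP; rewrite eq_le Nxb sr.
  have : th r = k * ((mu0 - L * r / 2) * r) by rewrite /th; ring.
  rewrite Gxb sr' in Gle; lra.
set mu' := mu0 - L * s.
have beta0 : 0 <= L * s by apply: mulr_ge0 => //; apply: ltW.
have betamu : L * s < mu0 by nra.
have hop : op_norm Nm Nn (g' 0 - g' xb) <= L * s.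
  have := hlip 0 xb; rewrite (nN0 Nn hNn) sub0r (nNN Nn hNn); apply => //.
    exact: ltW.
  exact: le_trans Nxb rrho.
have [u [Au Nu]] := surj Nm hNm Nn hNn (g' 0) (g' xb) mu0 (L * s) beta0 betamu hreg hop (- w).
rewrite (nNN Nm hNm) -/mu' in Nu.
have mu'0 : 0 < mu' by rewrite subr_gt0.
set eps := (1 - k) * mu' / 2.
have eps0 : 0 < eps by apply: divr_gt0 => //; apply: mulr_gt0 => //; rewrite subr_gt0.
have [d d0 hd] := hder xb (le_trans Nxb rrho) eps eps0.
set c := Num.min (d / 2) (r - s).
have c0 : 0 < c by rewrite lt_min subr_gt0 sr andbT divr_gt0.
have cd : c <= d / 2 by rewrite ge_min lexx.
have crs : c <= r - s by rewrite ge_min lexx orbT.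
set Nuu := Nn u in Nu.
have Nu0 : 0 <= Nuu := nN_ge0 Nn hNn u.
have Nu1 : 0 < Nuu + 1 by rewrite ltr_wpDl.
set t := Num.min 1 (c / (Nuu + 1)).
have t0 : 0 < t by rewrite lt_min ltr01 divr_gt0.
have t1 : t <= 1 by rewrite ge_min lexx.
have tc : t * Nuu <= c.
  have : t <= c / (Nuu + 1) by rewrite ge_min lexx orbT.
  rewrite ler_pdivlMr // => h; nra.
set z := t *: u.
have Nz : Nn z = t * Nuu by rewrite /z (nNZ Nn hNn) (gtr0_norm t0).
have hzd : Nn z < d.
  rewrite Nz; have : d / 2 < d by rewrite ltr_pdivrMr // ltr_pMr // ltr1n.
  lra.
have hdz := hd z hzd.
have e : g (xb + z) - y = (g (xb + z) - g xb - g' xb *m z) + (1 - t) *: w.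
  rewrite /z -scalemxAr Au /w; apply/matrixP => i j; rewrite !mxE; ring.
have t1' : 0 <= 1 - t by rewrite subr_ge0.
have hN1 : Nm (g (xb + z) - y) <= eps * (t * Nuu) + (1 - t) * Nm w.
  rewrite e; apply: le_trans (nND Nm hNm _ _) _.
  rewrite (nNZ Nm hNm) (ger0_norm t1') -Nz; lra.
have hN2 : Nn (xb + z) <= s + t * Nuu by rewrite -Nz; apply: nND.
have hN3 : Nn (xb + z) <= r by lra.
have hth : th (Nn (xb + z)) <= th s + k * (t * Nuu) * mu'.
  apply: le_trans (th_mono _ _ (nN_ge0 Nn hNn _) hN2 _) _; first by lra.
  by apply: th_step; apply: mulr_ge0 => //; apply: ltW.
have hmin := xmin _ hN3.
rewrite Gxb /G in hmin.
have X : t * Nuu * (eps + k * mu') = t * (1 + k) / 2 * (Nuu * mu').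
rewrite /eps; nra.
have Nu' : Nuu * mu' <= Nm w by rewrite -ler_pdivlMr.
have tk : 0 <= t * (1 + k) / 2.
  by apply: divr_ge0 => //; apply: mulr_ge0; [apply: ltW | apply: addr_ge0 => //; apply: ltW].
have Y : t * (1 + k) / 2 * (Nuu * mu') <= t * (1 + k) / 2 * Nm w by apply: ler_wpM2l.
have Z : t * (1 + k) / 2 * Nm w < t * Nm w.
  have : 0 < t * Nm w * (1 - k) by apply: mulr_gt0; [apply: mulr_gt0 | rewrite subr_gt0].
  move=> h; nra.
nra.
Qed.
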